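(* Let $c>0$, $T>0$ and $\Delta_1,\dots,\Delta_K>0$. Let $\Phi_c=\sup\{x\in\mathbb{R}:\sum_{i=1}^K\max\{\frac{x-\ln\Delta_i^{-1}}{c\Delta_i^2/2},0\}\le T\}$. Then the vector $(x_1,\dots,x_K)$ with \[ x_i=\max\Big\{\frac{\Phi_c-\ln\Delta_i^{-1}}{c\Delta_i^2/2},\,0\Big\} \] is an optimal solution of the program $\mathscr{P}_c(\{\Delta_i\}_{i=1}^K,T)$.
   Context: For $c>0$, $T\ge0$ and positive reals $\Delta_1,\dots,\Delta_K$, the program $\mathscr{P}_c(\{\Delta_i\}_{i=1}^K,T)$ is: minimize $\sum_{i=1}^K\exp(-c x_i\Delta_i^2)$ subject to $x_1+\dots+x_K=T$, $x_i\ge0$; its optimal value is also denoted $\mathscr{P}_c(\{\Delta_i\}_{i=1}^K,T)$. *)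

(* Defs.v *)
From HB Require Import structures.
From mathcomp Require Import all_boot all_order all_algebra.
From mathcomp Require Import all_classical all_reals all_analysis.
Set Implicit Arguments. Unset Strict Implicit. Unset Printing Implicit Defensive.
Import Order.TTheory GRing.Theory Num.Theory.
Local Open Scope ring_scope.
Local Open Scope classical_set_scope.

Definition Pobj {R : realType} {K : nat} (c : R) (D : 'I_K -> R) (x : 'I_K -> R) : R :=
  \sum_(i < K) expR (- (c * x i * D i ^+ 2)).

Definition Pfeasible {R : realType} {K : nat} (T : R) (x : 'I_K -> R) : Prop :=
  (\sum_(i < K) x i = T) /\ (forall i, 0 <= x i).

Definition Poptimal {R : realType} {K : nat} (c : R) (D : 'I_K -> R) (T : R)
  (x : 'I_K -> R) : Prop :=
  Pfeasible T x /\ (forall y, Pfeasible T y -> Pobj c D x <= Pobj c D y).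

Definition Phi {R : realType} {K : nat} (c : R) (D : 'I_K -> R) (T : R) : R :=
  sup [set z : R | \sum_(i < K) Num.max ((z - ln (D i)^-1) / (c * D i ^+ 2 / 2)) 0 <= T].

(* Main.v *)
Require Import Defs.
From HB Require Import structures.
From mathcomp Require Import all_boot all_order all_algebra.
From mathcomp Require Import all_classical all_reals all_analysis.
From mathcomp Require Import lra ring.
Import Order.TTheory GRing.Theory Num.Theory.
Local Open Scope ring_scope.

Lemma max0_lip (R : realType) (p q : R) : p <= q ->
  0 <= Num.max q 0 - Num.max p 0 <= q - p.
Proof.
move=> pq; rewrite !maxEle.
case: (leP q 0) => hq; case: (leP p 0) => hp; apply/andP; split; lra.
Qed.

Lemma g_lip (R : realType) (K : nat) (b w : 'I_K -> R) (hw : forall i, 0 < w i)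
  (x y : R) : x <= y ->
  0 <= \sum_(i < K) Num.max ((y - b i) / w i) 0 - \sum_(i < K) Num.max ((x - b i) / w i) 0
   <= (y - x) * \sum_(i < K) (w i)^-1.
Proof.
move=> xy; rewrite -sumrB mulr_sumr; apply/andP; split.
- apply: sumr_ge0 => i _.
  have H : (x - b i) / w i <= (y - b i) / w i.
    by rewrite ler_pM2r ?invr_gt0 // lerD2r.
  by case/andP: (@max0_lip R _ _ H).
- apply: ler_sum => i _.
  have H : (x - b i) / w i <= (y - b i) / w i.
    by rewrite ler_pM2r ?invr_gt0 // lerD2r.
  case/andP: (@max0_lip R _ _ H) => _ /le_trans; apply.
  by rewrite -mulrBl ler_pM2r ?invr_gt0 //; lra.
Qed.

Lemma lemaxl (R : realType) (x y : R) : x <= Num.max x y.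
Proof. by rewrite le_max lexx. Qed.
Lemma lemaxr (R : realType) (x y : R) : y <= Num.max x y.
Proof. by rewrite le_max lexx orbT. Qed.

Lemma tang (R : realType) (a x y : R) :
  expR (- (a * x)) * (1 - a * (y - x)) <= expR (- (a * y)).
Proof.
have -> : - (a * y) = - (a * x) + - (a * (y - x)) by ring.
rewrite expRD ler_pM2l ?expR_gt0 //; have := expR_ge1Dx (- (a * (y - x))); lra.
Qed.

Lemma key (R : realType) (c D P y : R) (hc : 0 < c) (hD : 0 < D) (hy : 0 <= y) :
  expR (- (c * Num.max ((P - ln D^-1) / (c * D ^+ 2 / 2)) 0 * D ^+ 2))
    - c * expR (- P) ^+ 2 * (y - Num.max ((P - ln D^-1) / (c * D ^+ 2 / 2)) 0)
  <= expR (- (c * y * D ^+ 2)).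
Proof.
have Dpos : D \in Num.pos by rewrite posrE.
rewrite lnV // opprK.
set q := (P + ln D) / (c * D ^+ 2 / 2).
have hw : 0 < c * D ^+ 2 / 2 by rewrite divr_gt0 // mulr_gt0 // exprn_gt0.
have ED : expR (ln D) = D by rewrite lnK.
have tg := @tang R (c * D ^+ 2).
rewrite maxEle; case: ifP => hq.
- rewrite mulr0 mul0r oppr0 expR0 addr0.
  have hP : P <= - ln D.
    move: hq; rewrite /q pmulr_lle0 ?invr_gt0 //; lra.
  have hE : D <= expR (- P) by rewrite -{1}ED ler_expR; lra.
  have hE0 : 0 < expR (- P) := expR_gt0 _.
  have := tg 0 y; rewrite mulr0 oppr0 expR0 mul1r ?subr0 ?addr0 (mulrAC c y).
  apply: le_trans; rewrite lerD2l lerN2; apply: ler_wpM2r => //; apply: ler_wpM2l; [exact: ltW|]; rewrite !expr2; apply: ler_pM => //; exact: ltW.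
- rewrite (mulrAC c q) (mulrAC c y); apply: le_trans (tg q y).
  have -> : c * D ^+ 2 * q = 2 * (P + ln D).
    by rewrite /q; field; apply/andP; split; exact: lt0r_neq0.
  set E := - (2 * (P + ln D)).
  have -> : E = 2%:R * (- P) + 2%:R * (- ln D) by rewrite /E; ring.
  rewrite expRD !expRM_natl (expRN (ln D)) ED.
  rewrite le_eqVlt; apply/orP; left; apply/eqP; rewrite /q; field; apply/andP; split; exact: lt0r_neq0.
Qed.

Theorem lemma3 (R : realType) (K : nat) (hK : (0 < K)%N) (c T : R)
  (D : 'I_K -> R) (hc : 0 < c) (hT : 0 < T) (hD : forall i, 0 < D i) :
  Poptimal c D T
    (fun i => Num.max ((Phi c D T - ln (D i)^-1) / (c * D i ^+ 2 / 2)) 0).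
Proof.
pose w := fun i => c * D i ^+ 2 / 2.
pose b := fun i => ln (D i)^-1.
have hw : forall i, 0 < w i.
  by move=> i; rewrite /w divr_gt0 // mulr_gt0 // exprn_gt0.
pose g := fun z => \sum_(i < K) Num.max ((z - b i) / w i) 0.
pose S := [set z : R | g z <= T]%classic.
have -> : Phi c D T = sup S by [].
pose i0 : 'I_K := Ordinal hK.
pose L := \sum_(i < K) (w i)^-1.
have hL : 0 < L.
  apply: (@lt_le_trans _ _ (w i0)^-1); first by rewrite invr_gt0.
  rewrite /L (bigD1 i0) //= lerDl; apply: sumr_ge0 => i _.
  by rewrite invr_ge0 ltW.
have hS : has_sup S.
  split.
  - exists (- \sum_(j < K) `|b j|); rewrite /S /= /g big1 ?ltW // => i _.
    rewrite maxEle; case: ifP => // /negbT; rewrite -ltNge => hlt.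
    exfalso; move: hlt; apply/negP; rewrite -leNgt.
    apply: mulr_le0_ge0; last by rewrite invr_ge0 ltW.
    have : `|b i| <= \sum_(j < K) `|b j|.
      by rewrite (bigD1 i) //= lerDl; apply: sumr_ge0.
    have := ler_norm (- b i); rewrite normrN; lra.
  - exists (T * w i0 + b i0) => z; rewrite /S /= => hz.
    have : (z - b i0) / w i0 <= T.
      apply: le_trans _ hz; apply: (le_trans (@lemaxl R _ 0)).
      rewrite /g (bigD1 i0) //= lerDl; apply: sumr_ge0 => i _.
      exact: lemaxr.
    rewrite ler_pdivrMr //; lra.
set P := sup S.
have gP : g P = T.
  apply/eqP; rewrite eq_le; apply/andP; split.
  - rewrite leNgt; apply/negP => hlt.
    have heps : 0 < (g P - T) / L by rewrite divr_gt0 // subr_gt0.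
    have [z Sz hz] := sup_adherent heps hS.
    have zP : z <= P := sup_upper_bound hS Sz.
    rewrite -/P in hz.
    have /andP[_ h2] := @g_lip R K b w hw _ _ zP.
    rewrite -/(g P) -/(g z) -/L in h2.
    have h3 : (P - z) * L < (g P - T) / L * L by rewrite ltr_pM2r //; lra.
    rewrite divfK ?lt0r_neq0 // in h3.
    move: Sz; rewrite /S /= => Sz.
    lra.
  - rewrite leNgt; apply/negP => hlt.
    pose z := P + (T - g P) / L.
    have Pz : P <= z by rewrite /z lerDl divr_ge0 // ?subr_ge0 ?ltW.
    have /andP[_ h2] := @g_lip R K b w hw _ _ Pz.
    rewrite -/(g P) -/(g z) -/L in h2.
    have h3 : (z - P) * L = T - g P.
      by rewrite /z (addrC P) addrK divfK // lt0r_neq0.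
    rewrite h3 in h2.
    have Sz : S z by rewrite /S /=; lra.
    have zP : z <= P := sup_upper_bound hS Sz.
    have : 0 < (T - g P) / L by rewrite divr_gt0 // subr_gt0.
    rewrite /z in zP; lra.
have feas : Pfeasible T (fun i => Num.max ((P - ln (D i)^-1) / (c * D i ^+ 2 / 2)) 0).
  split; first exact: gP.
  by move=> i; exact: lemaxr.
split => // y [hy1 hy0].
rewrite /Pobj.
have H : \sum_(i < K) (expR (- (c * Num.max ((P - ln (D i)^-1) / (c * D i ^+ 2 / 2)) 0 * D i ^+ 2))
    - c * expR (- P) ^+ 2 * (y i - Num.max ((P - ln (D i)^-1) / (c * D i ^+ 2 / 2)) 0))
  <= \sum_(i < K) expR (- (c * y i * D i ^+ 2)).
  by apply: ler_sum => i _; apply: key.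
apply: le_trans H; rewrite sumrB -mulr_sumr sumrB hy1.
have -> : \sum_(i < K) Num.max ((P - ln (D i)^-1) / (c * D i ^+ 2 / 2)) 0 = T by exact: gP.
by rewrite subrr mulr0 subr0.
Qed.
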